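(* Let $G$ be a countable group, and let $X$ be a proper metric space equipped with a $G$-action by isometries. Assume that there exist a compact metrizable $G$-space $K$ that does not carry any $G$-invariant probability measure, and a $G$-invariant Borel subset $K^*\subseteq K$ which contains a Borel subset homeomorphic to a Cantor set. Assume in addition that for every sequence $(g_n)_{n\in\mathbb N}$ in $G$ that escapes every compact subspace of $X$, there exist a subsequence $(g_{\sigma(n)})_{n\in\mathbb N}$ and points $\xi^-,\xi^+\in K$ such that for all $\xi\in K^*\setminus\{\xi^-\}$, the sequence $(g_{\sigma(n)}\xi)_{n\in\mathbb N}$ converges to $\xi^+$. Then the $G$-action on $X$ is properly proximal.
   Context: A sequence $(g_n)$ in $G$ escapes every compact subspace of $X$ if for some (equivalently any) $x\in X$, $(g_nx)$ eventually leaves every compact subset. The $G$-action on $X$ is properly proximal if there exist finitely many compact metrizable $G$-spaces $K_1,\dots,K_\ell$, none carrying a $G$-invariant probability measure, and diffuse probability measures $\eta_i$ on $K_i$, such that for every sequence $(g_n)$ escaping every compact subspace of $X$, there exist $i$ and a subsequence $(g_{\sigma(n)})$ with $g_{\sigma(n)}h\eta_i-g_{\sigma(n)}\eta_i\to0$ weak-$*$ for every $h\in G$. *)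

(* Defs.v *)
From HB Require Import structures.
From mathcomp Require Import all_boot all_order all_algebra.
From mathcomp Require Import all_classical all_reals all_analysis.
Set Implicit Arguments.
Unset Strict Implicit.
Unset Printing Implicit Defensive.
Import Order.TTheory GRing.Theory Num.Theory.
Import numFieldNormedType.Exports.
Local Open Scope classical_set_scope.
Local Open Scope ring_scope.

(* Pointed metric spaces (pointedness is needed to build the Borel
   measurable structure; it only says the space is nonempty). *)
#[short(type="pmetricType")]
HB.structure Definition PMetric (K : numDomainType) :=
  { M of Pointed M & Metric K M }.

Record group_law (G : Type) := GroupLaw {
  gmul : G -> G -> G;
  gone : G;
  ginv : G -> G;
  gmulA : forall x y z, gmul x (gmul y z) = gmul (gmul x y) z;
  gmul1g : forall x, gmul gone x = x;
  gmulVg : forall x, gmul (ginv x) x = gone }.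

Definition is_action (G : Type) (Gl : group_law G) (T : Type)
  (a : G -> T -> T) : Prop :=
  (forall x, a (gone Gl) x = x) /\
  (forall g h x, a (gmul Gl g h) x = a g (a h x)).

Definition borel (T : ptopologicalType) := g_sigma_algebraType (@open T).

Section defs.
Variable R : realType.
Variables (G : Type) (Gl : group_law G).

Definition compact_G_space (K : pmetricType R) (a : G -> K -> K) : Prop :=
  compact [set: K] /\ is_action Gl a /\ (forall g, continuous (a g)).

Definition gpush (K : pmetricType R) (a : K -> K)
  (mu : set (borel K) -> \bar R) : set (borel K) -> \bar R :=
  @pushforward _ _ (borel K) (borel K) R mu (a : borel K -> borel K).

Definition invariant_measure (K : pmetricType R) (a : G -> K -> K)
  (mu : set (borel K) -> \bar R) : Prop :=
  forall g (A : set (borel K)), measurable A -> gpush (a g) mu A = mu A.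

Definition carries_invariant_probability (K : pmetricType R)
  (a : G -> K -> K) : Prop :=
  exists mu : probability (borel K) R, invariant_measure a mu.

Definition diffuse (K : pmetricType R) (mu : set (borel K) -> \bar R) : Prop :=
  forall x : K, mu [set x] = 0%E.

Definition integ (K : pmetricType R) (mu : set (borel K) -> \bar R)
  (f : K -> R) : R := fine (\int[mu]_x (f x)%:E).

Definition wstar_diff_to0 (K : pmetricType R)
  (mu nu : nat -> set (borel K) -> \bar R) : Prop :=
  forall f : K -> R, continuous f ->
    (fun n => integ (mu n) f - integ (nu n) f) @ \oo --> 0.

Definition proper_metric (X : metricType R) : Prop :=
  forall (x : X) (r : R), compact [set y | mdist x y <= r].

Definition isometric_action (X : metricType R) (a : G -> X -> X) : Prop :=
  is_action Gl a /\ (forall g x y, mdist (a g x) (a g y) = mdist x y).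

Definition escapes (X : metricType R) (a : G -> X -> X) (g : nat -> G) : Prop :=
  exists x : X, forall C : set X, compact C ->
    \forall n \near \oo, ~ C (a (g n) x).

Definition strictly_increasing (s : nat -> nat) : Prop :=
  forall n, (s n < s n.+1)%N.

Definition properly_proximal (X : metricType R) (a : G -> X -> X) : Prop :=
  exists (l : nat) (K : 'I_l -> pmetricType R) (aK : forall i, G -> K i -> K i)
    (eta : forall i, probability (borel (K i)) R),
    (forall i, compact_G_space (aK i)) /\
    (forall i, ~ carries_invariant_probability (aK i)) /\
    (forall i, diffuse (eta i)) /\
    (forall g : nat -> G, escapes a g ->
       exists (i : 'I_l) (s : nat -> nat), strictly_increasing s /\
         forall h : G,
           wstar_diff_to0 (fun n => gpush (aK i (gmul Gl (g (s n)) h)) (eta i))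
                          (fun n => gpush (aK i (g (s n))) (eta i))).

Definition borel_cantor_subset (K : pmetricType R) (B : set K) : Prop :=
  @measurable _ (borel K) B /\
  exists (f : cantor_space -> K) (f' : K -> cantor_space),
    continuous f /\ f @` setT = B /\
    (forall z, f' (f z) = z) /\ {within B, continuous f'}.
End defs.

(* Main.v *)
Require Import Defs.
From HB Require Import structures.
From mathcomp Require Import all_boot all_order all_algebra.
From mathcomp Require Import all_classical all_reals all_analysis.
From mathcomp Require Import measurable_realfun.
Import Order.TTheory GRing.Theory Num.Theory.
Import numFieldNormedType.Exports.
Local Open Scope classical_set_scope.
Local Open Scope ring_scope.

Definition qn (R : realType) (n : nat) : R := ratr (odflt 0%R (unpickle n) : rat).
Definition dmap {R : realType} (x : R) : cantor_space := fun n => (x < qn R n).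

Lemma dmap_inj (R : realType) : injective (@dmap R).
Proof.
have key (x y : R) : x < y -> dmap x <> dmap y.
  move=> xy /(congr1 (fun f : cantor_space => f (pickle (projT1 (cid (@rat_in_itvoo _ x y xy)))))).
  case: cid => q /= /[!in_itv] /andP[xq qy].
  rewrite /dmap /qn pickleK /=; move: xq qy; rewrite /= => xq qy; rewrite xq => /esym; rewrite ltNge (ltW qy) //.
move=> x y e; have [xy|yx|//] := ltgtP x y.
  by case: (key _ _ xy).
by case: (key _ _ yx).
Qed.

Lemma cantor_cyl (V : set cantor_space) (z : cantor_space) : open V -> V z ->
  exists n, forall w : cantor_space, (forall i, (i < n)%N -> w i = z i) -> V w.
Proof.
move=> oV Vz; apply: contrapT => H.
have {}H n : exists w : cantor_space, (forall i, (i < n)%N -> w i = z i) /\ ~ V w.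
  apply: contrapT => H'; apply: H; exists n => w wz; apply: contrapT => Vw.
  by apply: H'; exists w.
have [w Hw] := choice H.
have wz : w @ \oo --> (z : cantor_space).
  apply/(@cvg_sup (nat -> bool) nat (fun i => Topological.class (initial_topology (fun f : nat -> bool => f i)))) => i.
  move=> A; rewrite nbhsE => -[B [oB Bz] BA].
  case: oB => C oC CB.
  exists i.+1 => // n /= ni; apply: BA; rewrite -CB /=.
  rewrite (Hw n).1 //; by rewrite -CB in Bz.
have : \forall n \near \oo, V (w n).
  by apply: wz; apply: open_nbhs_nbhs; split.
by case=> N _ /(_ N (leqnn N)); apply: (Hw N).2.
Qed.

Definition cyl (s : seq bool) : set cantor_space :=
  [set w | forall i, (i < size s)%N -> w i = nth false s i].

Lemma dmap_meas (R : realType) (V : set cantor_space) : open V ->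
  measurable ((@dmap R) @^-1` V).
Proof.
move=> oV.
have -> : (@dmap R) @^-1` V =
    \bigcup_(s : seq bool) [set x | cyl s `<=` V /\ cyl s (dmap x)].
  apply/seteqP; split => x /=.
    move=> Vx; have [n Hn] := cantor_cyl _ _ oV Vx.
    exists (mkseq (dmap x) n) => //; split.
      move=> w /= ws; apply: Hn => i ilt; rewrite ws ?size_mkseq// nth_mkseq//.
    by move=> i; rewrite size_mkseq => ilt; rewrite nth_mkseq.
  by case=> s _ [sV /sV].
apply: countable_bigcupT_measurable; first exact: countableP.
move=> s; have [sV|nsV] := pselect (cyl s `<=` V); last first.
  rewrite (_ : [set x | _] = set0); first exact: measurable0.
  by apply/seteqP; split => x // [].
rewrite (_ : [set x | _] = \bigcap_(i in `I_(size s))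
   (if nth false s i then `]-oo, qn R i[ else `[qn R i, +oo[)%classic).
  apply: fin_bigcap_measurable; first exact: finite_II.
  by move=> i _; case: ifP => _; exact: measurable_itv.
apply/seteqP; split => x /=.
  move=> [_ Hs] i /= ilt; move: (Hs i ilt); rewrite /dmap /=.
  by case: ifP => _ /=; rewrite in_itv /= ?andbT; [| rewrite leNgt => ->].
move=> Hs; split => // i ilt; move: (Hs i ilt); rewrite /dmap /=.
by case: ifP => _ /=; rewrite in_itv /= ?andbT // leNgt => /negbTE.
Qed.

Set Implicit Arguments.
Unset Strict Implicit.

Section Main.
Variables (R : realType) (K : pmetricType R) (fc : cantor_space -> K).
Hypotheses (cfc : continuous fc) (ifc : injective fc).

Definition UT := measurableTypeR R.
Definition psi : UT -> borel K := fun x => fc (@dmap R x).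

Lemma mpsi : measurable_fun setT psi.
Proof.
apply: (@measurability _ _ UT (borel K) setT psi (@open K)) => //.
move=> _ [A oA <-]; rewrite setTI.
by apply: (@dmap_meas R (fc @^-1` A)); move/continuousP : cfc; apply.
Qed.
Definition psiM := MeasurableFun.Pack (MeasurableFun.Class (isMeasurableFun.Build _ _ _ _ psi mpsi)).
Definition Pu := uniform_prob (@ltr01 R).
Definition eta : probability (borel K) R := distribution Pu psiM.

Lemma Pu_set1 (x : UT) : Pu [set x] = 0%E.
Proof.
have := (null_content_dominatesP _ _).1 (dominates_uniform_prob (@ltr01 R)).
by apply; [exact: measurable_set1 | exact: lebesgue_measure_set1].
Qed.
Lemma Pu_subsingleton (A : set UT) : (forall x y, A x -> A y -> x = y) ->
  measurable A /\ Pu A = 0%E.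
Proof.
move=> sA; have [->|/set0P[x Ax]] := eqVneq A set0.
  by split; [exact: measurable0 | exact: measure0].
have -> : A = [set x].
  by apply/seteqP; split => y /=; [move=> Ay; apply: sA | move=> ->].
by split; [exact: measurable_set1 | exact: Pu_set1].
Qed.
Lemma eta_diffuse : diffuse (eta : set (borel K) -> \bar R).
Proof.
move=> k; rewrite /eta /distribution /pushforward /=.
have H : forall x y, (psi @^-1` [set k]) x -> (psi @^-1` [set k]) y -> x = y.
  by move=> x y /= <- e; apply: (@dmap_inj R); apply: ifc.
exact: (Pu_subsingleton H).2.
Qed.

Lemma bdd_integrable d (T : measurableType d) (mu : probability T R) (D : set T)
  (g : T -> R) (M : R) : measurable D -> measurable_fun D g ->
  (forall x, `|g x| <= M) -> mu.-integrable D (EFin \o g).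
Proof.
move=> mD mg gM.
apply: (@le_integrable _ _ _ mu D mD _ (EFin \o cst M)).
- exact/measurable_EFinP.
- by move=> x _ /=; rewrite lee_fin (le_trans (gM x)) // ler_norm.
- exact: finite_measure_integrable_cst.
Qed.

Lemma cont_meas (T1 T2 : ptopologicalType) (c : T1 -> T2) :
  continuous c -> measurable_fun setT (c : borel T1 -> borel T2).
Proof.
move=> cc.
have := (@measurability _ _ (borel T1) (borel T2) setT c (@open T2)).
apply.
  by [].
move=> _ [A oA <-]; apply: sub_sigma_algebra; rewrite setTI.
by move/continuousP : cc; apply.
Qed.

Lemma cont_measR (T : ptopologicalType) (f : T -> R) :
  continuous f -> measurable_fun setT (f : borel T -> R).
Proof.
move=> cf; apply: (measurability _ (RGenOpens.measurableE R)).
move=> _ [_ [a [b ->]] <-]; apply: sub_sigma_algebra; rewrite setTI.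
by move/continuousP : cf; apply; exact: interval_open.
Qed.

Hypothesis cK : compact [set: K].

Lemma cont_bound (f : K -> R) : continuous f -> exists M, forall k, `|f k| <= M.
Proof.
move=> cf.
have cfK : compact (f @` setT) by apply: continuous_compact => //; exact: continuous_subspaceT.
case: (compact_bounded cfK) => M [_ HM].
exists (M + 1) => k; apply: (HM (M + 1)) => //.
by rewrite ltrDl.
Qed.

Lemma integ_eta (phi : K -> K) (f : K -> R) : continuous phi -> continuous f ->
  integ (gpush phi (eta : set (borel K) -> \bar R)) f = fine (\int[Pu]_x (f (phi (psi x)))%:E)%E.
Proof.
move=> cphi cf; have [M HM] := cont_bound cf.
have mf : measurable_fun setT (f : borel K -> R) by exact: cont_measR.
have mphi : measurable_fun setT (phi : borel K -> borel K) by exact: cont_meas.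
have mEf : measurable_fun setT (EFin \o f : borel K -> \bar R) by exact/measurable_EFinP.
have i1 : eta.-integrable (phi @^-1` setT) (EFin \o f \o phi).
  rewrite preimage_setT; apply: (@bdd_integrable _ _ _ _ _ M) => //.
  exact: (measurableT_comp mf mphi).
have i2 : Pu.-integrable setT (EFin \o f \o phi \o psiM).
  apply: (@bdd_integrable _ _ _ _ _ M) => //.
  exact: (measurableT_comp mf (measurableT_comp mphi mpsi)).
rewrite /integ /gpush.
rewrite (@integral_pushforward _ _ (borel K) (borel K) R phi mphi eta setT (EFin \o f) mEf i1 measurableT).
rewrite preimage_setT.
rewrite (@integral_distribution _ _ _ _ _ Pu psiM (EFin \o f \o phi)) //.
exact: (measurableT_comp mEf mphi).
Qed.

Lemma main_cvg (aKg : nat -> K -> K) (ah : K -> K) (phi1 : nat -> K -> K)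
  (f : K -> R) (xip xim : K) (Ks : set K) :
  (forall n, continuous (aKg n)) -> continuous ah -> (forall n, continuous (phi1 n)) ->
  (forall n x, phi1 n x = aKg n (ah x)) -> injective ah -> continuous f ->
  (forall x, Ks (psi x)) -> (forall x, Ks x -> Ks (ah x)) ->
  (forall xi, Ks xi -> xi <> xim -> (fun n => aKg n xi) @ \oo --> xip) ->
  (fun n => integ (gpush (phi1 n) (eta : set (borel K) -> \bar R)) f
          - integ (gpush (aKg n) (eta : set (borel K) -> \bar R)) f) @ \oo --> 0.
Proof.
move=> caKg cah cphi1 ephi iah cf Kpsi Kah hconv.
have [M HM] := cont_bound cf.
have mf := cont_measR cf.
pose F1 n (x : UT) := f (aKg n (ah (psi x))).
pose F2 n (x : UT) := f (aKg n (psi x)).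
have mF1 n : measurable_fun setT (F1 n).
  exact: (measurableT_comp mf (measurableT_comp (cont_meas (caKg n)) (measurableT_comp (cont_meas cah) mpsi))).
have mF2 n : measurable_fun setT (F2 n).
  exact: (measurableT_comp mf (measurableT_comp (cont_meas (caKg n)) mpsi)).
have iF1 n : Pu.-integrable setT (EFin \o F1 n).
  exact: (@bdd_integrable _ _ _ _ _ M measurableT (mF1 n) (fun x => HM _)).
have iF2 n : Pu.-integrable setT (EFin \o F2 n).
  exact: (@bdd_integrable _ _ _ _ _ M measurableT (mF2 n) (fun x => HM _)).
pose F n x := F1 n x - F2 n x.
have E n : integ (gpush (phi1 n) (eta : set (borel K) -> \bar R)) f
          - integ (gpush (aKg n) (eta : set (borel K) -> \bar R)) f
     = fine (\int[Pu]_x (F n x)%:E)%E.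
  rewrite !integ_eta //.
  under eq_integral => x _ do rewrite ephi.
  rewrite -fineB; [| exact: (integrable_fin_num measurableT (iF1 n)) | exact: (integrable_fin_num measurableT (iF2 n))].
  by rewrite -(integralB_EFin measurableT (iF1 n) (iF2 n)).
have -> : (fun n => integ (gpush (phi1 n) (eta : set (borel K) -> \bar R)) f
          - integ (gpush (aKg n) (eta : set (borel K) -> \bar R)) f) =
          (fun n => fine (\int[Pu]_x (F n x)%:E)%E) by apply: funext.
apply: (@fine_cvg _ _ _ _ (fun n => \int[Pu]_x (F n x)%:E)%E 0).
have mF n : measurable_fun setT (fun x => (F n x)%:E).
  by apply/measurable_EFinP; apply: measurable_funB.
have f_f : {ae Pu, forall x, setT x -> (fun n => (F n x)%:E) @ \oo --> (cst 0%E x)}.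
  have [m1 P1] := @Pu_subsingleton [set x | psi x = xim] (fun x y (ex : psi x = xim) (ey : psi y = xim) =>
     @dmap_inj R _ _ (ifc (etrans ex (esym ey)))).
  have [m2 P2] := @Pu_subsingleton [set x | ah (psi x) = xim] (fun x y (ex : ah (psi x) = xim) (ey : ah (psi y) = xim) =>
     @dmap_inj R _ _ (ifc (iah _ _ (etrans ex (esym ey))))).
  exists ([set x | psi x = xim] `|` [set x | ah (psi x) = xim]); split.
  - exact: measurableU.
  - exact: null_set_setU.
  move=> x /= Hx; apply: contrapT => Hn; apply: Hx => _.
  have nx1 : psi x <> xim by move=> e; apply: Hn; left.
  have nx2 : ah (psi x) <> xim by move=> e; apply: Hn; right.
  apply: cvg_EFin; first by apply: nearW.
  have c1 : (fun n => F1 n x) @ \oo --> f xip.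
    exact: (cvg_comp _ _ (hconv _ (Kah _ (Kpsi x)) nx2) (cf xip)).
  have c2 : (fun n => F2 n x) @ \oo --> f xip.
    exact: (cvg_comp _ _ (hconv _ (Kpsi x) nx1) (cf xip)).
  have H := cvgB c1 c2; rewrite subrr in H; exact: H.
have ig : Pu.-integrable setT (EFin \o cst (M + M)).
  exact: finite_measure_integrable_cst.
have f_g : {ae Pu, forall x n, setT x -> `|(F n x)%:E| <= (EFin \o cst (M + M)%R) x}%E.
  apply: aeW => x n _ /=; rewrite lee_fin.
  exact: le_trans (ler_normB _ _) (lerD (HM _) (HM _)).
have [_ _ H] := @dominated_convergence _ _ _ Pu setT measurableT (fun n x => (F n x)%:E)
  (cst 0%E) (EFin \o cst (M + M)) mF (measurable_cst _) f_f ig f_g.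
by move: H; rewrite integral0.
Qed.
End Main.
Unset Implicit Arguments.


Theorem lemma1p6 (R : realType) (G : Type) (Gl : group_law G)
  (countG : countable [set: G])
  (X : metricType R) (aX : G -> X -> X)
  (properX : proper_metric X) (isoX : isometric_action Gl aX)
  (K : pmetricType R) (aK : G -> K -> K)
  (KGsp : compact_G_space Gl aK)
  (noinv : ~ carries_invariant_probability aK)
  (Kstar : set K) (Kstar_borel : @measurable _ (borel K) Kstar)
  (Kstar_inv : forall g x, Kstar x -> Kstar (aK g x))
  (Kstar_cantor : exists B : set K, B `<=` Kstar /\ borel_cantor_subset B)
  (conv : forall g : nat -> G, escapes aX g ->
     exists (s : nat -> nat) (xim xip : K), strictly_increasing s /\
       forall xi, Kstar xi -> xi <> xim ->
         (fun n => aK (g (s n)) xi) @ \oo --> xip) :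
  properly_proximal Gl aX.

Proof.
case: KGsp => cK [actK contK].
case: Kstar_cantor => B [BKs [mB [fc [f' [cfc [imB [f'K _]]]]]]].
have ifc : injective fc := can_inj f'K.
exists 1%N, (fun _ => K), (fun _ => aK), (fun _ => eta cfc).
split; first by move=> _.
split; first by move=> _.
split; first by move=> _; exact: eta_diffuse.
move=> g esc; have [s [xim [xip [ss hc]]]] := conv g esc.
exists ord0, s; split => // h f cf.
have iah : injective (aK h).
  apply: (@can_inj _ _ _ (aK (ginv Gl h))) => x.
  by rewrite -actK.2 gmulVg actK.1.
apply: (@main_cvg R K fc cfc ifc cK (fun n => aK (g (s n))) (aK h)
  (fun n => aK (gmul Gl (g (s n)) h)) f xip xim Kstar) => //.
- by move=> n x; rewrite actK.2.
- move=> x; apply: BKs; rewrite -imB; by exists (dmap x).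
- by move=> x; exact: Kstar_inv.
Qed.
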